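(* For each compact metric space $G\in\mathcal{M}$ and each real $r>\operatorname{diam}G$, the sphere $\{Y\in\mathcal{M}: d_{GH}(G,Y)=r\}$ in $\mathcal{M}$ is path connected (as a subspace of the metric space $(\mathcal{M},d_{GH})$).
   Context: $\mathcal{M}$ denotes the set of isometry classes of compact metric spaces endowed with the Gromov–Hausdorff distance $d_{GH}$ (a metric on $\mathcal{M}$): $d_{GH}(X,Y)$ is the infimum of $r$ such that there exist a metric space $Z$ and subsets $X',Y'\subset Z$ isometric to $X,Y$ with Hausdorff distance $d_H(X',Y')\le r$. *)

(* Defs.v *)
From Stdlib Require Import Reals.
From Coquelicot Require Import Coquelicot.
Open Scope R_scope.

Record is_metric (X : Type) (d : X -> X -> R) : Prop := {
  metric_nonneg : forall x y, 0 <= d x y;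
  metric_eq0    : forall x y, d x y = 0 <-> x = y;
  metric_sym    : forall x y, d x y = d y x;
  metric_tri    : forall x y z, d x z <= d x y + d y z
}.

(* Compactness of a metric space (sequential compactness, equivalent to
   compactness for metric spaces). *)
Definition seq_compact (X : Type) (d : X -> X -> R) : Prop :=
  forall u : nat -> X, exists (phi : nat -> nat) (x : X),
    (forall n, (phi n < phi (S n))%nat) /\
    (forall eps, 0 < eps -> exists N, forall n, (N <= n)%nat -> d (u (phi n)) x < eps).

(* A (nonempty) compact metric space; elements of the Gromov-Hausdorff space M
   are isometry classes of these. *)
Record CMS := {
  cms_car :> Type;
  cms_dist : cms_car -> cms_car -> R;
  cms_metric : is_metric cms_car cms_dist;
  cms_inhabited : inhabited cms_car;
  cms_compact : seq_compact cms_car cms_dist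
}.

Definition diam (X : CMS) : R :=
  real (Lub_Rbar (fun t => exists x y : X, t = cms_dist X x y)).

Definition hausdorff_le (Z : Type) (dZ : Z -> Z -> R) (A B : Z -> Prop) (r : R) : Prop :=
  (forall a, A a -> forall eps, 0 < eps -> exists b, B b /\ dZ a b < r + eps) /\
  (forall b, B b -> forall eps, 0 < eps -> exists a, A a /\ dZ a b < r + eps).

Definition isometric_embedding (X : CMS) (Z : Type) (dZ : Z -> Z -> R) (f : X -> Z) : Prop :=
  forall x y : X, dZ (f x) (f y) = cms_dist X x y.

Definition GH_admissible (X Y : CMS) (r : R) : Prop :=
  exists (Z : Type) (dZ : Z -> Z -> R) (f : X -> Z) (g : Y -> Z),
    is_metric Z dZ /\ isometric_embedding X Z dZ f /\ isometric_embedding Y Z dZ g /\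
    hausdorff_le Z dZ (fun z => exists x, z = f x) (fun z => exists y, z = g y) r.

Definition dGH (X Y : CMS) : R := real (Glb_Rbar (GH_admissible X Y)).

(* Path connectedness of the subset S of (M, d_GH). A path in M is lifted to a
   family of representatives gamma : [0,1] -> CMS (possible by choice);
   continuity is w.r.t. d_GH. *)
Definition GH_path_connected (S : CMS -> Prop) : Prop :=
  forall X Y : CMS, S X -> S Y ->
    exists gamma : R -> CMS,
      gamma 0 = X /\ gamma 1 = Y /\
      (forall t, 0 <= t <= 1 -> S (gamma t)) /\
      (forall t, 0 <= t <= 1 -> forall eps, 0 < eps -> exists delta, 0 < delta /\
         forall s, 0 <= s <= 1 -> Rabs (s - t) < delta -> dGH (gamma s) (gamma t) < eps).

(* Main.v *)
Require Import Defs.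
From Stdlib Require Import Reals Lra Lia ZArith Classical ClassicalEpsilon.
From Coquelicot Require Import Coquelicot.
Open Scope R_scope.

Lemma glb_fin (S : R -> Prop) (m c0 : R) :
  S c0 -> (forall c, S c -> m <= c) ->
  Glb_Rbar S = Finite (real (Glb_Rbar S)).
Proof.
  intros H0 Hm. destruct (Glb_Rbar_correct S) as [Hlb Hgl].
  pose proof (Hlb c0 H0) as H1.
  assert (H2 : Rbar_le m (Glb_Rbar S)) by (apply Hgl; intros x Hx; simpl; apply Hm; auto).
  destruct (Glb_Rbar S); simpl in *; auto; contradiction.
Qed.

Lemma glb_le (S : R -> Prop) (m c0 : R) :
  S c0 -> (forall c, S c -> m <= c) -> forall c, S c -> real (Glb_Rbar S) <= c.
Proof.
  intros H0 Hm c Hc. pose proof (glb_fin S m c0 H0 Hm) as E.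
  destruct (Glb_Rbar_correct S) as [Hlb Hgl]. pose proof (Hlb c Hc) as H.
  rewrite E in H. exact H.
Qed.

Lemma glb_ge (S : R -> Prop) (m c0 : R) :
  S c0 -> (forall c, S c -> m <= c) -> m <= real (Glb_Rbar S).
Proof.
  intros H0 Hm. pose proof (glb_fin S m c0 H0 Hm) as E.
  destruct (Glb_Rbar_correct S) as [Hlb Hgl].
  assert (H2 : Rbar_le m (Glb_Rbar S)) by (apply Hgl; intros x Hx; simpl; apply Hm; auto).
  rewrite E in H2. exact H2.
Qed.

Lemma glb_approx (S : R -> Prop) (m c0 : R) :
  S c0 -> (forall c, S c -> m <= c) -> forall eps, 0 < eps ->
  exists c, S c /\ c < real (Glb_Rbar S) + eps.
Proof.
  intros H0 Hm eps He. pose proof (glb_fin S m c0 H0 Hm) as E.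
  destruct (Glb_Rbar_correct S) as [Hlb Hgl].
  apply NNPP; intro Hn.
  assert (Hb : is_lb_Rbar S (real (Glb_Rbar S) + eps)).
  { intros x Hx. simpl. apply Rnot_lt_le. intro Hl. apply Hn. exists x; auto. }
  pose proof (Hgl _ Hb) as H. rewrite E in H. simpl in H. lra.
Qed.

Definition corr (A B : Type) (R0 : A -> B -> Prop) : Prop :=
  (forall a, exists b, R0 a b) /\ (forall b, exists a, R0 a b).

Definition Fadm (A : CMS) (T : Type) (e : T -> T -> R) (c : R) : Prop :=
  exists R0 : A -> T -> Prop, corr A T R0 /\
    forall g g' p q, R0 g p -> R0 g' q -> Rabs (cms_dist A g g' - e p q) <= 2 * c.

Definition F (A : CMS) (T : Type) (e : T -> T -> R) : R := real (Glb_Rbar (Fadm A T e)).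

Definition Fgood (T : Type) (e : T -> T -> R) : Prop :=
  inhabited T /\ (exists B, forall p q, Rabs (e p q) <= B) /\ (forall p, e p p = 0).

Lemma dist_refl (A : CMS) (x : A) : cms_dist A x x = 0.
Proof. apply (metric_eq0 _ _ (cms_metric A)); auto. Qed.
Lemma dist_nonneg (A : CMS) (x y : A) : 0 <= cms_dist A x y.
Proof. apply (metric_nonneg _ _ (cms_metric A)). Qed.
Lemma dist_sym (A : CMS) (x y : A) : cms_dist A x y = cms_dist A y x.
Proof. apply (metric_sym _ _ (cms_metric A)). Qed.
Lemma dist_tri (A : CMS) (x y z : A) : cms_dist A x z <= cms_dist A x y + cms_dist A y z.
Proof. apply (metric_tri _ _ (cms_metric A)). Qed.

Lemma inc_ge (phi : nat -> nat) : (forall n, (phi n < phi (S n))%nat) -> forall n, (n <= phi n)%nat.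
Proof. intros H n; induction n; [lia|]. specialize (H n); lia. Qed.

Lemma inc_lt (phi : nat -> nat) : (forall n, (phi n < phi (S n))%nat) ->
  forall m n, (m < n)%nat -> (phi m < phi n)%nat.
Proof. intros H m n Hmn; induction Hmn; [apply H|]. specialize (H m0); lia. Qed.

Lemma cms_bounded (A : CMS) : exists B, 0 <= B /\ forall x y : A, cms_dist A x y <= B.
Proof.
  destruct (cms_inhabited A) as [x0].
  assert (H : exists B, forall y : A, cms_dist A x0 y <= B).
  { apply NNPP; intro Hn.
    assert (Hu : forall n : nat, exists y : A, INR n < cms_dist A x0 y).
    { intro n. apply NNPP; intro Hn2. apply Hn. exists (INR n). intro y.
      apply Rnot_lt_le. intro Hl. apply Hn2. exists y; auto. }
    pose (u := fun n => proj1_sig (constructive_indefinite_description _ (Hu n))).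
    assert (Hu' : forall n, INR n < cms_dist A x0 (u n)).
    { intro n. unfold u. destruct (constructive_indefinite_description _ (Hu n)); auto. }
    destruct (cms_compact A u) as (phi & x & Hphi & Hc).
    destruct (Hc 1 Rlt_0_1) as [N HN].
    destruct (archimed (cms_dist A x0 x + 1)) as [Hup _].
    set (k := Z.to_nat (up (cms_dist A x0 x + 1))).
    assert (Hk : cms_dist A x0 x + 1 < INR k).
    { unfold k. rewrite INR_IZR_INZ. rewrite Z2Nat.id. lra.
      apply le_IZR. pose proof (dist_nonneg A x0 x). lra. }
    set (n := Nat.max N k).
    specialize (HN n (Nat.le_max_l _ _)).
    pose proof (Hu' (phi n)) as H1.
    pose proof (inc_ge phi Hphi n) as H2.
    assert (H3 : INR k <= INR (phi n)) by (apply le_INR; unfold n in *; lia).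
    pose proof (dist_tri A x0 x (u (phi n))). rewrite (dist_sym A x) in H. lra. }
  destruct H as [B HB]. exists (2 * B). split.
  - pose proof (HB x0). pose proof (dist_nonneg A x0 x0). lra.
  - intros x y. pose proof (dist_tri A x x0 y). rewrite (dist_sym A x x0) in H.
    pose proof (HB x); pose proof (HB y). lra.
Qed.
Lemma Fadm_lb (A : CMS) T e : Fgood T e -> forall c, Fadm A T e c -> 0 <= c.
Proof.
  intros [[p] [_ H0]] c [R0 [[H1 H2] H3]]. destruct (H2 p) as [g Hg].
  specialize (H3 g g p p Hg Hg). rewrite dist_refl, H0 in H3.
  pose proof (Rabs_pos (0 - 0)). lra.
Qed.

Lemma Fadm_ne (A : CMS) T e : Fgood T e -> exists c, Fadm A T e c.
Proof.
  intros [[p] [[B HB] H0]]. destruct (cms_bounded A) as [BA [HBA0 HBA]].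
  destruct (cms_inhabited A) as [g0].
  exists ((BA + B) / 2). exists (fun _ _ => True). split.
  - split; intros; eauto.
  - intros g g' p0 q _ _. eapply Rle_trans; [apply Rabs_triang|].
    rewrite Rabs_Ropp. rewrite Rabs_right by (apply Rle_ge, dist_nonneg).
    pose proof (HBA g g'); pose proof (HB p0 q). lra.
Qed.

Lemma F_le (A : CMS) T e (R0 : A -> T -> Prop) c : Fgood T e -> corr A T R0 ->
  (forall g g' p q, R0 g p -> R0 g' q -> Rabs (cms_dist A g g' - e p q) <= 2 * c) ->
  F A T e <= c.
Proof.
  intros Hg Hc Hd. destruct (Fadm_ne A T e Hg) as [c0 H0].
  unfold F. apply (glb_le _ 0 c0 H0 (Fadm_lb A T e Hg)). exists R0; auto.
Qed.

Lemma F_ge (A : CMS) T e m : Fgood T e -> (forall c, Fadm A T e c -> m <= c) -> m <= F A T e.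
Proof.
  intros Hg Hm. destruct (Fadm_ne A T e Hg) as [c0 H0].
  unfold F. apply (glb_ge _ m c0 H0 Hm).
Qed.

Lemma F_nonneg (A : CMS) T e : Fgood T e -> 0 <= F A T e.
Proof. intros Hg. apply F_ge; auto. apply Fadm_lb; auto. Qed.

Lemma F_lt (A : CMS) T e c : Fgood T e -> F A T e < c -> Fadm A T e c.
Proof.
  intros Hg Hlt. destruct (Fadm_ne A T e Hg) as [c0 H0].
  destruct (glb_approx _ 0 c0 H0 (Fadm_lb A T e Hg) (c - F A T e)) as [c1 [[R0 [HR Hd]] Hc1]]; [lra|].
  exists R0; split; auto. intros. specialize (Hd g g' p q H H1). unfold F in *. lra.
Qed.

Lemma F_lift (A : CMS) T U (e1 : U -> U -> R) (e2 : T -> T -> R) (pi : T -> U) :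
  Fgood T e2 -> Fgood U e1 ->
  (forall u, exists p, pi p = u) -> (forall p q, e2 p q = e1 (pi p) (pi q)) ->
  F A U e1 = F A T e2.
Proof.
  intros Hg2 Hg1 Hs He. apply Rle_antisym.
  - apply F_ge; auto. intros c [R0 [[H1 H2] H3]].
    apply (F_le A U e1 (fun g u => exists p, pi p = u /\ R0 g p)); auto.
    + split.
      * intro g. destruct (H1 g) as [p Hp]. eauto.
      * intro u. destruct (Hs u) as [p Hp]. destruct (H2 p) as [g Hg]. eauto.
    + intros g g' u v [p [<- Hp]] [q [<- Hq]]. rewrite <- He. auto.
  - apply F_ge; auto. intros c [R0 [[H1 H2] H3]].
    apply (F_le A T e2 (fun g p => R0 g (pi p))); auto.
    + split.
      * intro g. destruct (H1 g) as [u Hu]. destruct (Hs u) as [p <-]. eauto.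
      * intro p. apply H2.
    + intros g g' p q Hp Hq. rewrite He. auto.
Qed.

Lemma F_lip (A : CMS) T e1 e2 d : Fgood T e1 -> Fgood T e2 ->
  (forall p q, Rabs (e1 p q - e2 p q) <= d) -> F A T e1 <= F A T e2 + d / 2.
Proof.
  intros Hg1 Hg2 Hd. apply Rle_plus_epsilon. intros eps He.
  destruct (F_lt A T e2 (F A T e2 + eps) Hg2 ltac:(lra)) as [R0 [HR H3]].
  apply (F_le A T e1 R0); auto.
  intros g g' p q Hp Hq. specialize (H3 g g' p q Hp Hq). specialize (Hd p q).
  replace (cms_dist A g g' - e1 p q) with ((cms_dist A g g' - e2 p q) + (e2 p q - e1 p q)) by ring.
  eapply Rle_trans; [apply Rabs_triang|]. rewrite <- Rabs_Ropp in Hd.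
  replace (- (e1 p q - e2 p q)) with (e2 p q - e1 p q) in Hd by ring. lra.
Qed.
Section dummy. End dummy.

Definition Dset (A B : CMS) (R0 : A -> B -> Prop) (c : R) (a : A) (b : B) : R -> Prop :=
  fun v => exists a' b', R0 a' b' /\ v = cms_dist A a a' + c + cms_dist B b' b.

Definition Dd (A B : CMS) R0 c a b : R := real (Glb_Rbar (Dset A B R0 c a b)).

Lemma Dset_ne (A B : CMS) R0 c a b : corr A B R0 -> exists v, Dset A B R0 c a b v.
Proof. intros [H1 _]. destruct (H1 a) as [b' Hb]. eexists; exists a, b'; eauto. Qed.

Lemma Dset_lb (A B : CMS) R0 c a b : forall v, Dset A B R0 c a b v -> c <= v.
Proof. intros v (a' & b' & _ & ->). pose proof (dist_nonneg A a a'); pose proof (dist_nonneg B b' b); lra. Qed.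

Lemma D_le (A B : CMS) R0 c a b a' b' : corr A B R0 -> R0 a' b' ->
  Dd A B R0 c a b <= cms_dist A a a' + c + cms_dist B b' b.
Proof.
  intros Hc HR. destruct (Dset_ne A B R0 c a b Hc) as [v0 Hv0].
  apply (glb_le _ c v0 Hv0 (Dset_lb A B R0 c a b)). exists a', b'; auto.
Qed.

Lemma D_ge (A B : CMS) R0 c a b : corr A B R0 -> c <= Dd A B R0 c a b.
Proof.
  intros Hc. destruct (Dset_ne A B R0 c a b Hc) as [v0 Hv0].
  apply (glb_ge _ c v0 Hv0 (Dset_lb A B R0 c a b)).
Qed.

Lemma D_approx (A B : CMS) R0 c a b : corr A B R0 -> forall eps, 0 < eps ->
  exists a' b', R0 a' b' /\ cms_dist A a a' + c + cms_dist B b' b < Dd A B R0 c a b + eps.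
Proof.
  intros Hc eps He. destruct (Dset_ne A B R0 c a b Hc) as [v0 Hv0].
  destruct (glb_approx _ c v0 Hv0 (Dset_lb A B R0 c a b) eps He) as [v [(a' & b' & HR & ->) Hv]].
  exists a', b'; auto.
Qed.

Lemma DT1 (A B : CMS) R0 c a a' b : corr A B R0 ->
  Dd A B R0 c a b <= cms_dist A a a' + Dd A B R0 c a' b.
Proof.
  intros Hc. apply Rle_plus_epsilon; intros eps He.
  destruct (D_approx A B R0 c a' b Hc eps He) as (a1 & b1 & HR & H).
  pose proof (D_le A B R0 c a b a1 b1 Hc HR). pose proof (dist_tri A a a' a1). lra.
Qed.

Lemma DT2 (A B : CMS) R0 c a b b' : corr A B R0 ->
  Dd A B R0 c a b <= Dd A B R0 c a b' + cms_dist B b' b.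
Proof.
  intros Hc. apply Rle_plus_epsilon; intros eps He.
  destruct (D_approx A B R0 c a b' Hc eps He) as (a1 & b1 & HR & H).
  pose proof (D_le A B R0 c a b a1 b1 Hc HR). pose proof (dist_tri B b1 b' b). lra.
Qed.

Lemma DT3 (A B : CMS) R0 c a a' b : corr A B R0 ->
  (forall g g' p q, R0 g p -> R0 g' q -> Rabs (cms_dist A g g' - cms_dist B p q) <= 2 * c) ->
  cms_dist A a a' <= Dd A B R0 c a b + Dd A B R0 c a' b.
Proof.
  intros Hc Hd. apply Rle_plus_epsilon; intros eps He.
  destruct (D_approx A B R0 c a b Hc (eps/2)) as (a1 & b1 & HR1 & H1); [lra|].
  destruct (D_approx A B R0 c a' b Hc (eps/2)) as (a2 & b2 & HR2 & H2); [lra|].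
  specialize (Hd a1 a2 b1 b2 HR1 HR2). apply Rabs_le_between in Hd.
  pose proof (dist_tri A a a1 a'). pose proof (dist_tri A a1 a2 a').
  pose proof (dist_tri B b1 b b2). rewrite (dist_sym A a2 a') in *.
  rewrite (dist_sym B b b2) in *. lra.
Qed.

Lemma DT4 (A B : CMS) R0 c a b b' : corr A B R0 ->
  (forall g g' p q, R0 g p -> R0 g' q -> Rabs (cms_dist A g g' - cms_dist B p q) <= 2 * c) ->
  cms_dist B b b' <= Dd A B R0 c a b + Dd A B R0 c a b'.
Proof.
  intros Hc Hd. apply Rle_plus_epsilon; intros eps He.
  destruct (D_approx A B R0 c a b Hc (eps/2)) as (a1 & b1 & HR1 & H1); [lra|].
  destruct (D_approx A B R0 c a b' Hc (eps/2)) as (a2 & b2 & HR2 & H2); [lra|].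
  specialize (Hd a1 a2 b1 b2 HR1 HR2). apply Rabs_le_between in Hd.
  pose proof (dist_tri B b b1 b'). pose proof (dist_tri B b1 b2 b').
  pose proof (dist_tri A a1 a a2). rewrite (dist_sym B b b1) in *.
  rewrite (dist_sym A a1 a) in *. lra.
Qed.

Definition dZ (A B : CMS) R0 c (x y : A + B) : R :=
  match x, y with
  | inl a, inl a' => cms_dist A a a'
  | inr b, inr b' => cms_dist B b b'
  | inl a, inr b => Dd A B R0 c a b
  | inr b, inl a => Dd A B R0 c a b
  end.

Lemma lemA (A B : CMS) (R0 : A -> B -> Prop) c : corr A B R0 -> 0 < c ->
  (forall g g' p q, R0 g p -> R0 g' q -> Rabs (cms_dist A g g' - cms_dist B p q) <= 2 * c) ->
  GH_admissible A B c.
Proof.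
  intros Hc Hc0 Hd.
  exists (A + B)%type, (dZ A B R0 c), inl, inr.
  split; [|split; [|split]].
  - split.
    + intros [a|b] [a'|b']; simpl; try apply dist_nonneg.
      * pose proof (D_ge A B R0 c a b' Hc); lra.
      * pose proof (D_ge A B R0 c a' b Hc); lra.
    + intros [a|b] [a'|b']; simpl; split; intro H.
      * f_equal. apply (metric_eq0 _ _ (cms_metric A)); auto.
      * inversion H; subst; apply dist_refl.
      * pose proof (D_ge A B R0 c a b' Hc); lra.
      * discriminate.
      * pose proof (D_ge A B R0 c a' b Hc); lra.
      * discriminate.
      * f_equal. apply (metric_eq0 _ _ (cms_metric B)); auto.
      * inversion H; subst; apply dist_refl.
    + intros [a|b] [a'|b']; simpl; auto; apply dist_sym.
    + intros [a|b] [a'|b'] [a''|b'']; simpl.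
      * apply dist_tri.
      * apply DT1; auto.
      * apply DT3; auto.
      * apply DT2; auto.
      * pose proof (DT1 A B R0 c a'' a' b Hc). rewrite (dist_sym A a'' a') in H. lra.
      * apply DT4; auto.
      * pose proof (DT2 A B R0 c a'' b b' Hc). rewrite (dist_sym B b' b) in H. lra.
      * apply dist_tri.
  - intros x y; reflexivity.
  - intros x y; reflexivity.
  - split.
    + intros z [a ->] eps He. pose proof Hc as [H1 _]. destruct (H1 a) as [b Hb].
      exists (inr b). split; eauto. simpl.
      pose proof (D_le A B R0 c a b a b Hc Hb). rewrite !dist_refl in H. lra.
    + intros z [b ->] eps He. pose proof Hc as [_ H1]. destruct (H1 b) as [a Ha].
      exists (inl a). split; eauto. simpl.
      pose proof (D_le A B R0 c a b a b Hc Ha). rewrite !dist_refl in H. lra.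
Qed.
Lemma cms_good (B : CMS) : Fgood B (cms_dist B).
Proof.
  split; [apply cms_inhabited|split].
  - destruct (cms_bounded B) as [b [H0 H]]. exists b. intros p q.
    rewrite Rabs_right by (apply Rle_ge, dist_nonneg). auto.
  - apply dist_refl.
Qed.

Lemma lemB (A B : CMS) r : GH_admissible A B r -> forall eps, 0 < eps ->
  Fadm A B (cms_dist B) (r + eps).
Proof.
  intros (Z & d & f & g & Hm & Hf & Hg & [H1 H2]) eps He.
  exists (fun a b => d (f a) (g b) < r + eps / 2). split; [split|].
  - intro a. destruct (H1 (f a) (ex_intro _ a eq_refl) (eps/2) ltac:(lra)) as [z [[b ->] Hb]]. eauto.
  - intro b. destruct (H2 (g b) (ex_intro _ b eq_refl) (eps/2) ltac:(lra)) as [z [[a ->] Ha]]. eauto.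
  - intros a a' b b' Hab Hab'. rewrite <- Hf, <- Hg.
    pose proof (metric_tri _ _ Hm (f a) (g b) (f a')).
    pose proof (metric_tri _ _ Hm (g b) (g b') (f a')).
    pose proof (metric_tri _ _ Hm (g b) (f a) (g b')).
    pose proof (metric_tri _ _ Hm (f a) (f a') (g b')).
    pose proof (metric_sym _ _ Hm (g b) (f a)).
    pose proof (metric_sym _ _ Hm (g b') (f a')).
    apply Rabs_le; split; lra.
Qed.

Lemma GHadm_lb (A B : CMS) r : GH_admissible A B r -> 0 <= r.
Proof.
  intros H. apply Rle_plus_epsilon. intros eps He.
  pose proof (Fadm_lb A B (cms_dist B) (cms_good B) _ (lemB A B r H eps He)). lra.
Qed.

Lemma GHadm_ne (A B : CMS) : exists r, GH_admissible A B r.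
Proof.
  destruct (cms_bounded A) as [BA [HA0 HA]]. destruct (cms_bounded B) as [BB [HB0 HB]].
  destruct (cms_inhabited A) as [a0]. destruct (cms_inhabited B) as [b0].
  exists ((BA + BB) / 2 + 1). apply (lemA A B (fun _ _ => True)).
  - split; intros; eauto.
  - lra.
  - intros g g' p q _ _. pose proof (HA g g'); pose proof (HB p q).
    pose proof (dist_nonneg A g g'); pose proof (dist_nonneg B p q). apply Rabs_le; split; lra.
Qed.

Lemma dGH_F (A B : CMS) : dGH A B = F A B (cms_dist B).
Proof.
  destruct (GHadm_ne A B) as [r0 Hr0].
  pose proof (cms_good B) as Hg.
  apply Rle_antisym.
  - apply Rle_plus_epsilon. intros eps He.
    destruct (F_lt A B (cms_dist B) (F A B (cms_dist B) + eps/2) Hg ltac:(lra)) as [R0 [HR Hd]].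
    pose proof (F_nonneg A B (cms_dist B) Hg).
    assert (Hadm : GH_admissible A B (F A B (cms_dist B) + eps)).
    { apply (lemA A B R0); auto. lra. intros. specialize (Hd g g' p q H0 H1). lra. }
    unfold dGH. pose proof (glb_le _ 0 r0 Hr0 (GHadm_lb A B) _ Hadm). lra.
  - apply Rle_plus_epsilon. intros eps He.
    destruct (glb_approx _ 0 r0 Hr0 (GHadm_lb A B) (eps/2) ltac:(lra)) as [r [Hr Hlt]].
    pose proof (lemB A B r Hr (eps/2) ltac:(lra)) as [R0 [HR Hd]].
    pose proof (F_le A B (cms_dist B) R0 (r + eps/2) Hg HR Hd). unfold dGH. lra.
Qed.

Lemma dGH_corr (A B : CMS) (R0 : A -> B -> Prop) c : corr A B R0 ->
  (forall g g' p q, R0 g p -> R0 g' q -> Rabs (cms_dist A g g' - cms_dist B p q) <= 2 * c) ->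
  dGH A B <= c.
Proof. intros. rewrite dGH_F. apply (F_le A B _ R0); auto. apply cms_good. Qed.
Definition sc (T : Type) (l : R) (e : T -> T -> R) : T -> T -> R := fun p q => l * e p q.

Lemma sc_good T l e : Fgood T e -> Fgood T (sc T l e).
Proof.
  intros [Hi [[B HB] H0]]. split; auto. split.
  - exists (Rabs l * B). intros p q. unfold sc. rewrite Rabs_mult.
    apply Rmult_le_compat_l; [apply Rabs_pos|auto].
  - intro p. unfold sc. rewrite H0. ring.
Qed.

Lemma F_upper (A : CMS) T e a B : Fgood T e -> (forall g g', cms_dist A g g' <= a) ->
  (forall p q, Rabs (e p q) <= B) -> F A T e <= (a + B) / 2.
Proof.
  intros Hg Ha HB. destruct (cms_inhabited A) as [g0]. destruct Hg as [[p0] HH].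
  apply (F_le A T e (fun _ _ => True)). split; auto. split; intros; eauto.
  intros g g' p q _ _. eapply Rle_trans; [apply Rabs_triang|].
  rewrite Rabs_Ropp. rewrite Rabs_right by (apply Rle_ge, dist_nonneg).
  pose proof (Ha g g'); pose proof (HB p q). lra.
Qed.

Lemma F_lower (A : CMS) T e a p q : Fgood T e -> (forall g g', cms_dist A g g' <= a) ->
  (e p q - a) / 2 <= F A T e.
Proof.
  intros Hg Ha. apply F_ge; auto. intros c [R0 [[H1 H2] H3]].
  destruct (H2 p) as [g Hg1]. destruct (H2 q) as [g' Hg2].
  specialize (H3 g g' p q Hg1 Hg2). apply Rabs_le_between in H3.
  pose proof (dist_nonneg A g g'). pose proof (Ha g g'). lra.
Qed.

Lemma F_mono (A : CMS) T e a l m : Fgood T e -> (forall g g', cms_dist A g g' <= a) ->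
  (forall p q, 0 <= e p q) -> 0 < l -> l < m -> a < 2 * F A T (sc T l e) ->
  F A T (sc T l e) <= l / m * F A T (sc T m e).
Proof.
  intros Hg Ha He0 Hl Hlm Hbig.
  assert (Hk : forall eps, 0 < eps -> F A T (sc T l e) <= Rmax (a/2) (l / m * (F A T (sc T m e) + eps))).
  { intros eps Heps.
    destruct (F_lt A T (sc T m e) (F A T (sc T m e) + eps) (sc_good T m e Hg) ltac:(lra)) as [R0 [HR Hd]].
    apply (F_le A T _ R0); auto. apply sc_good; auto.
    intros g g' p q Hp Hq. specialize (Hd g g' p q Hp Hq).
    pose proof (dist_nonneg A g g') as Hdg0. pose proof (Ha g g').
    pose proof (Rmax_l (a/2) (l / m * (F A T (sc T m e) + eps))).
    pose proof (Rmax_r (a/2) (l / m * (F A T (sc T m e) + eps))).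
    set (M := Rmax (a/2) (l / m * (F A T (sc T m e) + eps))) in *.
    set (dg := cms_dist A g g') in *. set (c := F A T (sc T m e)) in *.
    unfold sc in Hd |- *; cbv beta in *.
    apply Rabs_le_between in Hd.
    assert (Hr : 0 < l / m) by (apply Rdiv_lt_0_compat; lra).
    assert (Hr1 : l / m < 1) by (apply (Rmult_lt_reg_r m); [lra|]; field_simplify; lra).
    assert (Hx : l * e p q = l / m * (m * e p q)) by (field; lra).
    apply Rabs_le; split.
    - assert (l / m * (m * e p q - dg) <= l / m * (2 * (c + eps))) by (apply Rmult_le_compat_l; lra).
      assert (l / m * dg <= dg) by (pose proof (Rmult_le_compat_r dg (l/m) 1 Hdg0 ltac:(lra)); lra).
      lra.
    - pose proof (He0 p q). assert (0 <= l * e p q) by (apply Rmult_le_pos; lra). lra. }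
  apply Rle_plus_epsilon. intros eps Heps.
  specialize (Hk (eps * m / l)). 
  assert (0 < eps * m / l) by (apply Rdiv_lt_0_compat; [apply Rmult_lt_0_compat|]; lra).
  specialize (Hk H). unfold Rmax in Hk. destruct (Rle_dec _ _) in Hk; [|lra].
  replace (l / m * (F A T (sc T m e) + eps * m / l)) with (l / m * F A T (sc T m e) + eps) in Hk by (field; lra).
  lra.
Qed.
Definition ed (X Y : CMS) (t : R) : (X * Y)%type -> (X * Y)%type -> R :=
  fun p q => (1 - t) * cms_dist X (fst p) (fst q) + t * cms_dist Y (snd p) (snd q).

Lemma ed_good (X Y : CMS) t : Fgood (X * Y)%type (ed X Y t).
Proof.
  destruct (cms_inhabited X) as [x0]. destruct (cms_inhabited Y) as [y0].
  destruct (cms_bounded X) as [BX [HX0 HX]]. destruct (cms_bounded Y) as [BY [HY0 HY]].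
  split; [constructor; exact (x0, y0)|split].
  - exists (Rabs (1 - t) * BX + Rabs t * BY). intros p q. unfold ed.
    eapply Rle_trans; [apply Rabs_triang|]. rewrite !Rabs_mult.
    rewrite (Rabs_right (cms_dist X _ _)) by (apply Rle_ge, dist_nonneg).
    rewrite (Rabs_right (cms_dist Y _ _)) by (apply Rle_ge, dist_nonneg).
    apply Rplus_le_compat; apply Rmult_le_compat_l; auto; apply Rabs_pos.
  - intro p. unfold ed. rewrite !dist_refl. ring.
Qed.

Lemma W_metric (X Y : CMS) t l : 0 < t < 1 -> 0 < l -> is_metric (X * Y)%type (sc _ l (ed X Y t)).
Proof.
  intros Ht Hl. unfold sc, ed. split.
  - intros p q. pose proof (dist_nonneg X (fst p) (fst q)). pose proof (dist_nonneg Y (snd p) (snd q)).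
    apply Rmult_le_pos; [lra|]. apply Rplus_le_le_0_compat; apply Rmult_le_pos; lra.
  - intros [x y] [x' y']; simpl; split; intro H.
    + pose proof (dist_nonneg X x x'). pose proof (dist_nonneg Y y y').
      assert (H9 : (1 - t) * cms_dist X x x' + t * cms_dist Y y y' = 0).
      { apply (Rmult_eq_reg_l l); [lra|lra]. }
      assert (0 <= (1 - t) * cms_dist X x x') by (apply Rmult_le_pos; lra).
      assert (0 <= t * cms_dist Y y y') by (apply Rmult_le_pos; lra).
      assert (E1 : (1 - t) * cms_dist X x x' = 0) by lra.
      assert (E2 : t * cms_dist Y y y' = 0) by lra.
      apply Rmult_integral in E1. apply Rmult_integral in E2.
      destruct E1 as [E1|E1]; [lra|]. destruct E2 as [E2|E2]; [lra|].
      apply (metric_eq0 _ _ (cms_metric X)) in E1. apply (metric_eq0 _ _ (cms_metric Y)) in E2.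
      subst; auto.
    + inversion H; subst. rewrite !dist_refl. ring.
  - intros p q. rewrite (dist_sym X (fst p)), (dist_sym Y (snd p)). auto.
  - intros p q r0. pose proof (dist_tri X (fst p) (fst q) (fst r0)).
    pose proof (dist_tri Y (snd p) (snd q) (snd r0)).
    rewrite <- Rmult_plus_distr_l. apply Rmult_le_compat_l; [lra|].
    assert ((1 - t) * cms_dist X (fst p) (fst r0) <= (1 - t) * (cms_dist X (fst p) (fst q) + cms_dist X (fst q) (fst r0)))
      by (apply Rmult_le_compat_l; lra).
    assert (t * cms_dist Y (snd p) (snd r0) <= t * (cms_dist Y (snd p) (snd q) + cms_dist Y (snd q) (snd r0)))
      by (apply Rmult_le_compat_l; lra).
    lra.
Qed.

Lemma W_compact (X Y : CMS) t l : 0 < t < 1 -> 0 < l -> seq_compact (X * Y)%type (sc _ l (ed X Y t)).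
Proof.
  intros Ht Hl u.
  destruct (cms_compact X (fun n => fst (u n))) as (phi1 & x & Hp1 & Hc1).
  destruct (cms_compact Y (fun n => snd (u (phi1 n)))) as (phi2 & y & Hp2 & Hc2).
  exists (fun n => phi1 (phi2 n)), (x, y). split.
  - intro n. apply inc_lt; auto.
  - intros eps He. set (e' := eps / (l + 1)).
    assert (He' : 0 < e') by (unfold e'; apply Rdiv_lt_0_compat; lra).
    destruct (Hc1 e' He') as [N1 HN1]. destruct (Hc2 e' He') as [N2 HN2].
    exists (Nat.max N1 N2). intros n Hn.
    specialize (HN2 n ltac:(lia)). specialize (HN1 (phi2 n)).
    pose proof (inc_ge phi2 Hp2 n). specialize (HN1 ltac:(lia)).
    simpl in *. unfold sc, ed; simpl.
    set (a1 := cms_dist X (fst (u (phi1 (phi2 n)))) x) in *.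
    set (a2 := cms_dist Y (snd (u (phi1 (phi2 n)))) y) in *.
    pose proof (dist_nonneg X (fst (u (phi1 (phi2 n)))) x).
    assert ((1 - t) * a1 + t * a2 < e').
    { assert ((1 - t) * a1 <= (1 - t) * e') by (apply Rmult_le_compat_l; lra).
      assert (t * a2 < t * e') by (apply Rmult_lt_compat_l; lra). lra. }
    assert (l * ((1 - t) * a1 + t * a2) <= l * e') by (apply Rmult_le_compat_l; lra).
    assert (l * e' < eps). { unfold e'. apply (Rmult_lt_reg_r (l + 1)); [lra|].
      field_simplify; lra. }
    lra.
Qed.

Definition W (X Y : CMS) (t l : R) (Ht : 0 < t < 1) (Hl : 0 < l) : CMS :=
  {| cms_car := (X * Y)%type; cms_dist := sc _ l (ed X Y t);
     cms_metric := W_metric X Y t l Ht Hl;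
     cms_inhabited := ltac:(destruct (cms_inhabited X) as [x0]; destruct (cms_inhabited Y) as [y0]; constructor; exact (x0, y0));
     cms_compact := W_compact X Y t l Ht Hl |}.
Lemma diam_ub (G : CMS) : forall g g' : G, cms_dist G g g' <= diam G.
Proof.
  intros g g'. destruct (cms_bounded G) as [B [HB0 HB]].
  unfold diam. destruct (Lub_Rbar_correct (fun t => exists x y : G, t = cms_dist G x y)) as [Hub Hl].
  assert (H1 := Hub (cms_dist G g g') (ex_intro _ g (ex_intro _ g' eq_refl))).
  assert (H2 : Rbar_le (Lub_Rbar (fun t => exists x y : G, t = cms_dist G x y)) B).
  { apply Hl. intros t (x & y & ->). simpl. auto. }
  destruct (Lub_Rbar _); simpl in *; auto; contradiction.
Qed.

Lemma lip_cont (f : R -> R) K : 0 <= K -> (forall x y, Rabs (f x - f y) <= K * Rabs (x - y)) -> continuity f.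
Proof.
  intros HK Hf x eps He. exists (eps / (K + 1)). split.
  - apply Rdiv_lt_0_compat; lra.
  - intros y [_ Hy]. simpl in *. unfold R_dist in *. eapply Rle_lt_trans; [apply Hf|].
    apply Rle_lt_trans with ((K+1) * Rabs (y - x)).
    + apply Rmult_le_compat_r; [apply Rabs_pos|lra].
    + apply (Rmult_lt_reg_r (/(K+1))). apply Rinv_0_lt_compat; lra.
      replace ((K + 1) * Rabs (y - x) * / (K + 1)) with (Rabs (y - x)) by (field; lra).
      unfold Rdiv in Hy. lra.
Qed.

Section Main.
Variables G X Y : CMS.
Variable r : R.
Hypothesis Hr : diam G < r.
Hypothesis HX : dGH G X = r.
Hypothesis HY : dGH G Y = r.

Let a := diam G.
Lemma Ha : forall g g' : G, cms_dist G g g' <= a.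
Proof. apply diam_ub. Qed.
Lemma a0 : 0 <= a.
Proof. destruct (cms_inhabited G) as [g]. pose proof (Ha g g). rewrite dist_refl in H. auto. Qed.

Definition BX := proj1_sig (constructive_indefinite_description _ (cms_bounded X)).
Definition BY := proj1_sig (constructive_indefinite_description _ (cms_bounded Y)).
Lemma HBX : 0 <= BX /\ forall x y : X, cms_dist X x y <= BX.
Proof. unfold BX. destruct (constructive_indefinite_description _ _); auto. Qed.
Lemma HBY : 0 <= BY /\ forall x y : Y, cms_dist Y x y <= BY.
Proof. unfold BY. destruct (constructive_indefinite_description _ _); auto. Qed.
Definition B := BX + BY + 1.
Lemma B_pos : 0 < B.
Proof. unfold B. pose proof HBX; pose proof HBY. lra. Qed.

Let e t := ed X Y t.
Definition Phi t l := F G (X * Y)%type (sc _ l (e t)).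

Lemma e_bounds t p q : 0 <= t <= 1 -> 0 <= e t p q <= B.
Proof.
  intros Ht. unfold e, ed. destruct HBX as [_ H1]. destruct HBY as [_ H2].
  pose proof (H1 (fst p) (fst q)); pose proof (H2 (snd p) (snd q)).
  pose proof (dist_nonneg X (fst p) (fst q)); pose proof (dist_nonneg Y (snd p) (snd q)).
  unfold B. split.
  - apply Rplus_le_le_0_compat; apply Rmult_le_pos; lra.
  - assert ((1 - t) * cms_dist X (fst p) (fst q) <= (1 - t) * BX) by (apply Rmult_le_compat_l; lra).
    assert (t * cms_dist Y (snd p) (snd q) <= t * BY) by (apply Rmult_le_compat_l; lra).
    assert ((1 - t) * BX <= BX) by (pose proof (proj1 HBX); nra).
    assert (t * BY <= BY) by (pose proof (proj1 HBY); nra). lra.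
Qed.

Lemma sc_diff t s l m p q : 0 <= t <= 1 -> 0 <= s <= 1 ->
  Rabs (sc _ l (e t) p q - sc _ m (e s) p q) <= Rabs (l - m) * B + Rabs m * Rabs (t - s) * B.
Proof.
  intros Ht Hs. unfold sc.
  replace (l * e t p q - m * e s p q) with ((l - m) * e t p q + m * (e t p q - e s p q)) by ring.
  eapply Rle_trans; [apply Rabs_triang|]. rewrite !Rabs_mult.
  pose proof (e_bounds t p q Ht). rewrite (Rabs_right (e t p q)) by lra.
  apply Rplus_le_compat.
  - apply Rmult_le_compat_l; [apply Rabs_pos|lra].
  - rewrite Rmult_assoc. apply Rmult_le_compat_l; [apply Rabs_pos|].
    unfold e, ed. replace ((1 - t) * cms_dist X (fst p) (fst q) + t * cms_dist Y (snd p) (snd q) -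
      ((1 - s) * cms_dist X (fst p) (fst q) + s * cms_dist Y (snd p) (snd q))) with
      ((t - s) * (cms_dist Y (snd p) (snd q) - cms_dist X (fst p) (fst q))) by ring.
    rewrite Rabs_mult. apply Rmult_le_compat_l; [apply Rabs_pos|].
    destruct HBX as [_ H1]. destruct HBY as [_ H2].
    pose proof (H1 (fst p) (fst q)); pose proof (H2 (snd p) (snd q)).
    pose proof (dist_nonneg X (fst p) (fst q)); pose proof (dist_nonneg Y (snd p) (snd q)).
    pose proof (proj1 HBX); pose proof (proj1 HBY).
    apply Rabs_le; unfold B; lra.
Qed.

Lemma Phi_lip t s l m : 0 <= t <= 1 -> 0 <= s <= 1 ->
  Rabs (Phi t l - Phi s m) <= (Rabs (l - m) * B + Rabs m * Rabs (t - s) * B) / 2.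
Proof.
  intros Ht Hs. unfold Phi. apply Rabs_le. split.
  - pose proof (F_lip G _ (sc _ m (e s)) (sc _ l (e t)) (Rabs (l - m) * B + Rabs m * Rabs (t - s) * B)
      (sc_good _ m _ (ed_good X Y s)) (sc_good _ l _ (ed_good X Y t))).
    assert (forall p q, Rabs (sc _ m (e s) p q - sc _ l (e t) p q) <= Rabs (l - m) * B + Rabs m * Rabs (t - s) * B).
    { intros p q. rewrite Rabs_minus_sym. apply sc_diff; auto. }
    specialize (H H0). lra.
  - pose proof (F_lip G _ (sc _ l (e t)) (sc _ m (e s)) (Rabs (l - m) * B + Rabs m * Rabs (t - s) * B)
      (sc_good _ l _ (ed_good X Y t)) (sc_good _ m _ (ed_good X Y s))).
    assert (forall p q, Rabs (sc _ l (e t) p q - sc _ m (e s) p q) <= Rabs (l - m) * B + Rabs m * Rabs (t - s) * B).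
    { intros p q. apply sc_diff; auto. }
    specialize (H H0). lra.
Qed.

Lemma posX : exists x x' : X, 0 < cms_dist X x x'.
Proof.
  apply NNPP; intro Hn.
  assert (H0 : forall x x' : X, cms_dist X x x' = 0).
  { intros x x'. pose proof (dist_nonneg X x x'). apply Rle_antisym; auto.
    apply Rnot_lt_le. intro H1. apply Hn; eauto. }
  pose proof (F_upper G X (cms_dist X) a 0 (cms_good X) Ha) as H.
  rewrite <- dGH_F, HX in H. pose proof a0. unfold a in *.
  assert (r <= (diam G + 0) / 2). { apply H. intros p q. rewrite H0, Rabs_R0. lra. }
  lra.
Qed.

Lemma posY : exists y y' : Y, 0 < cms_dist Y y y'.
Proof.
  apply NNPP; intro Hn.
  assert (H0 : forall x x' : Y, cms_dist Y x x' = 0).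
  { intros x x'. pose proof (dist_nonneg Y x x'). apply Rle_antisym; auto.
    apply Rnot_lt_le. intro H1. apply Hn; eauto. }
  pose proof (F_upper G Y (cms_dist Y) a 0 (cms_good Y) Ha) as H.
  rewrite <- dGH_F, HY in H. pose proof a0. unfold a in *.
  assert (r <= (diam G + 0) / 2). { apply H. intros p q. rewrite H0, Rabs_R0. lra. }
  lra.
Qed.
Lemma r_pos : a < r /\ 0 < r.
Proof. pose proof a0. unfold a in *. lra. Qed.

Definition l0 := (r - a / 2) / B.
Lemma l0_pos : 0 < l0.
Proof. unfold l0. pose proof r_pos; pose proof B_pos; pose proof a0. apply Rdiv_lt_0_compat; lra. Qed.

Lemma Phi_l0 t : 0 <= t <= 1 -> Phi t l0 < r.
Proof.
  intros Ht. unfold Phi.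
  pose proof (F_upper G _ (sc _ l0 (e t)) a (l0 * B) (sc_good _ l0 _ (ed_good X Y t)) Ha) as H.
  assert (H1 : l0 * B = r - a / 2) by (unfold l0; pose proof B_pos; field; lra).
  pose proof r_pos. pose proof a0.
  assert (F G (X * Y)%type (sc _ l0 (e t)) <= (a + l0 * B) / 2).
  { apply H. intros p q. unfold sc. rewrite Rabs_mult. pose proof (e_bounds t p q Ht).
    pose proof l0_pos. rewrite !Rabs_right by lra.
    apply Rmult_le_compat_l; [pose proof l0_pos; lra|lra]. }
  lra.
Qed.

Definition xsig := @constructive_indefinite_description (cms_car X) (fun x => exists x', 0 < cms_dist X x x') posX.
Definition xx := proj1_sig xsig.
Definition xx' := proj1_sig (@constructive_indefinite_description (cms_car X) (fun x' => 0 < cms_dist X xx x') (proj2_sig xsig)).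
Definition ysig := @constructive_indefinite_description (cms_car Y) (fun x => exists x', 0 < cms_dist Y x x') posY.
Definition yy := proj1_sig ysig.
Definition yy' := proj1_sig (@constructive_indefinite_description (cms_car Y) (fun x' => 0 < cms_dist Y yy x') (proj2_sig ysig)).
Lemma Hxx : 0 < cms_dist X xx xx'.
Proof. unfold xx'. destruct (constructive_indefinite_description _ _). auto. Qed.
Lemma Hyy : 0 < cms_dist Y yy yy'.
Proof. unfold yy'. destruct (constructive_indefinite_description _ _). auto. Qed.

Definition m0 := Rmin (cms_dist X xx xx') (cms_dist Y yy yy').
Lemma m0_pos : 0 < m0.
Proof. unfold m0. apply Rmin_glb_lt; [apply Hxx|apply Hyy]. Qed.

Lemma e_PQ t : 0 <= t <= 1 -> m0 <= e t (xx, yy) (xx', yy').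
Proof.
  intros Ht. unfold e, ed; simpl.
  pose proof (Rmin_l (cms_dist X xx xx') (cms_dist Y yy yy')).
  pose proof (Rmin_r (cms_dist X xx xx') (cms_dist Y yy yy')). fold m0 in H, H0.
  assert ((1 - t) * m0 <= (1 - t) * cms_dist X xx xx') by (apply Rmult_le_compat_l; lra).
  assert (t * m0 <= t * cms_dist Y yy yy') by (apply Rmult_le_compat_l; lra). lra.
Qed.

Definition l1 := l0 + (2 * r + a) / m0 + 1.
Lemma l0_l1 : l0 < l1.
Proof.
  unfold l1. pose proof m0_pos; pose proof r_pos; pose proof a0.
  assert (0 <= (2 * r + a) / m0) by (apply Rmult_le_pos; [lra|apply Rlt_le, Rinv_0_lt_compat; lra]). lra.
Qed.

Lemma Phi_l1 t : 0 <= t <= 1 -> r < Phi t l1.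
Proof.
  intros Ht. unfold Phi.
  pose proof (F_lower G _ (sc _ l1 (e t)) a (xx, yy) (xx', yy') (sc_good _ l1 _ (ed_good X Y t)) Ha) as H.
  unfold sc in H at 1. pose proof (e_PQ t Ht). pose proof m0_pos; pose proof l0_pos; pose proof r_pos; pose proof a0.
  assert (l1 * m0 <= l1 * e t (xx, yy) (xx', yy')) by (apply Rmult_le_compat_l; pose proof l0_l1; lra).
  assert (l1 * m0 > 2 * r + a).
  { unfold l1. rewrite Rmult_plus_distr_r, Rmult_plus_distr_r.
    replace ((2 * r + a) / m0 * m0) with (2 * r + a) by (field; lra).
    assert (0 < l0 * m0) by (apply Rmult_lt_0_compat; lra). lra. }
  lra.
Qed.

Lemma root_ex t : 0 <= t <= 1 -> { l | l0 <= l <= l1 /\ Phi t l = r }.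
Proof.
  intros Ht.
  destruct (IVT (fun l => Phi t l - r) l0 l1) as [z [Hz1 Hz2]].
  - apply (lip_cont _ (B / 2)). pose proof B_pos; lra.
    intros x y. pose proof (Phi_lip t t x y Ht Ht).
    replace (t - t) with 0 in H by ring. rewrite Rabs_R0 in H.
    replace (Phi t x - r - (Phi t y - r)) with (Phi t x - Phi t y) by ring. lra.
  - apply l0_l1.
  - pose proof (Phi_l0 t Ht). lra.
  - pose proof (Phi_l1 t Ht). lra.
  - exists z. split; auto. lra.
Qed.

Lemma e_nonneg t : 0 <= t <= 1 -> forall p q, 0 <= e t p q.
Proof. intros Ht p q. apply (e_bounds t p q Ht). Qed.

Lemma Phi_mono t l m : 0 <= t <= 1 -> 0 < l -> l < m -> a < 2 * Phi t l -> Phi t l <= l / m * Phi t m.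
Proof. intros. apply (F_mono G _ (e t) a l m (ed_good X Y t) Ha (e_nonneg t H)); auto. Qed.

Lemma root_unique t l m : 0 <= t <= 1 -> 0 < l -> 0 < m -> Phi t l = r -> Phi t m = r -> l = m.
Proof.
  intros Ht Hl Hm H1 H2. pose proof r_pos.
  destruct (Rtotal_order l m) as [Hlt|[Heq|Hgt]]; auto.
  - pose proof (Phi_mono t l m Ht Hl Hlt ltac:(lra)). rewrite H1, H2 in H0.
    assert (l / m < 1) by (apply (Rmult_lt_reg_r m); [lra|]; field_simplify; lra).
    nra.
  - pose proof (Phi_mono t m l Ht Hm Hgt ltac:(lra)). rewrite H1, H2 in H0.
    assert (m / l < 1) by (apply (Rmult_lt_reg_r l); [lra|]; field_simplify; lra).
    nra.
Qed.

Lemma ex_lam t : exists l, 0 <= t <= 1 -> 0 < l /\ Phi t l = r.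
Proof.
  destruct (Rle_dec 0 t) as [h0|h0]; [destruct (Rle_dec t 1) as [h1|h1]|].
  - destruct (root_ex t (conj h0 h1)) as [l [Hl Hp]]. exists l. intros _. split; auto.
    pose proof l0_pos; lra.
  - exists 0. intros; lra.
  - exists 0. intros; lra.
Qed.

Definition lam t := proj1_sig (constructive_indefinite_description _ (ex_lam t)).
Lemma lam_spec t : 0 <= t <= 1 -> 0 < lam t /\ Phi t (lam t) = r.
Proof. unfold lam. destruct (constructive_indefinite_description _ _); auto. Qed.
Lemma Phi01 : Phi 0 1 = r.
Proof.
  rewrite <- HX, dGH_F. unfold Phi. symmetry.
  destruct (cms_inhabited Y) as [y0].
  apply (F_lift G _ _ (cms_dist X) _ fst (sc_good _ 1 _ (ed_good X Y 0)) (cms_good X)).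
  - intro x. exists (x, y0). auto.
  - intros p q. unfold sc, e, ed. ring.
Qed.

Lemma Phi11 : Phi 1 1 = r.
Proof.
  rewrite <- HY, dGH_F. unfold Phi. symmetry.
  destruct (cms_inhabited X) as [x0].
  apply (F_lift G _ _ (cms_dist Y) _ snd (sc_good _ 1 _ (ed_good X Y 1)) (cms_good Y)).
  - intro y. exists (x0, y). auto.
  - intros p q. unfold sc, e, ed. ring.
Qed.

Lemma lam_0 : lam 0 = 1.
Proof.
  assert (H : 0 <= 0 <= 1) by lra. destruct (lam_spec 0 H).
  apply (root_unique 0 _ _ H); auto; try lra. apply Phi01.
Qed.

Lemma lam_1 : lam 1 = 1.
Proof.
  assert (H : 0 <= 1 <= 1) by lra. destruct (lam_spec 1 H).
  apply (root_unique 1 _ _ H); auto; try lra. apply Phi11.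
Qed.

Lemma lam_cont t : 0 <= t <= 1 -> forall eps, 0 < eps -> exists delta, 0 < delta /\
  forall s, 0 <= s <= 1 -> Rabs (s - t) < delta -> Rabs (lam s - lam t) < eps.
Proof.
  intros Ht eps He. destruct (lam_spec t Ht) as [HL HPL]. set (L := lam t) in *.
  pose proof r_pos as [Har Hr0]. pose proof B_pos as HB.
  set (e' := Rmin (eps / 2) (L / 2)).
  assert (He' : 0 < e') by (unfold e'; apply Rmin_glb_lt; lra).
  assert (He'1 : e' <= eps / 2) by apply Rmin_l.
  assert (He'2 : e' <= L / 2) by apply Rmin_r.
  set (lm := L - e'). set (lp := L + e').
  assert (Hlm : 0 < lm) by (unfold lm; lra).
  assert (H1 : Phi t lm < r).
  { apply Rnot_le_lt. intro Hc.
    pose proof (Phi_mono t lm L Ht Hlm ltac:(unfold lm; lra) ltac:(lra)) as Hm.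
    rewrite HPL in Hm. assert (lm / L < 1) by (apply (Rmult_lt_reg_r L); [lra|]; field_simplify; unfold lm; lra).
    nra. }
  assert (H2 : r < Phi t lp).
  { pose proof (Phi_mono t L lp Ht HL ltac:(unfold lp; lra) ltac:(lra)) as Hm.
    rewrite HPL in Hm. pose proof (Rmult_le_compat_l (lp / L) _ _ ltac:(apply Rlt_le, Rdiv_lt_0_compat; unfold lp; lra) Hm).
    replace (lp / L * (L / lp * Phi t lp)) with (Phi t lp) in H by (field; unfold lp; lra).
    assert (1 < lp / L) by (apply (Rmult_lt_reg_r L); [lra|]; field_simplify; unfold lp; lra).
    nra. }
  set (eta := Rmin (r - Phi t lm) (Phi t lp - r)).
  assert (Heta : 0 < eta) by (unfold eta; apply Rmin_glb_lt; lra).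
  assert (Heta1 : eta <= r - Phi t lm) by apply Rmin_l.
  assert (Heta2 : eta <= Phi t lp - r) by apply Rmin_r.
  exists (eta / (lp * B + 1)). split.
  { apply Rdiv_lt_0_compat; auto. assert (0 < lp * B) by (apply Rmult_lt_0_compat; unfold lp; lra). lra. }
  intros s Hs Hst.
  assert (Hcl : forall l, 0 < l <= lp -> Rabs (Phi s l - Phi t l) < eta).
  { intros l Hl. pose proof (Phi_lip s t l l Hs Ht). replace (l - l) with 0 in H by ring.
    rewrite Rabs_R0, (Rabs_right l) in H by lra.
    eapply Rle_lt_trans; [apply H|].
    assert (Hq : Rabs (s - t) * (lp * B + 1) < eta).
    { apply (Rmult_lt_reg_r (/ (lp * B + 1))). apply Rinv_0_lt_compat.
      assert (0 < lp * B) by (apply Rmult_lt_0_compat; unfold lp; lra). lra.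
      replace (Rabs (s - t) * (lp * B + 1) * / (lp * B + 1)) with (Rabs (s - t)) by
        (field; assert (0 < lp * B) by (apply Rmult_lt_0_compat; unfold lp; lra); lra).
      unfold Rdiv in Hst. lra. }
    assert (l * Rabs (s - t) * B <= lp * Rabs (s - t) * B).
    { apply Rmult_le_compat_r; [lra|]. apply Rmult_le_compat_r; [apply Rabs_pos|lra]. }
    pose proof (Rabs_pos (s - t)).
    assert (lp * Rabs (s - t) * B <= Rabs (s - t) * (lp * B + 1)) by nra.
    lra. }
  assert (Hs1 : Phi s lm < r).
  { pose proof (Hcl lm ltac:(unfold lp, lm in *; lra)). apply Rabs_lt_between in H. lra. }
  assert (Hs2 : r < Phi s lp).
  { pose proof (Hcl lp ltac:(unfold lp in *; lra)). apply Rabs_lt_between in H. lra. }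
  destruct (IVT (fun l => Phi s l - r) lm lp) as [z [Hz1 Hz2]].
  - apply (lip_cont _ (B / 2)). lra.
    intros x y. pose proof (Phi_lip s s x y Hs Hs).
    replace (s - s) with 0 in H by ring. rewrite Rabs_R0 in H.
    replace (Phi s x - r - (Phi s y - r)) with (Phi s x - Phi s y) by ring. lra.
  - unfold lm, lp; lra.
  - lra.
  - lra.
  - destruct (lam_spec s Hs) as [Hls Hps].
    assert (lam s = z) by (apply (root_unique s _ _ Hs); auto; lra).
    rewrite H. apply Rabs_lt_between. unfold lm, lp in Hz1. lra.
Qed.
Lemma lam_pos_open t : 0 < t -> t < 1 -> 0 < lam t.
Proof. intros. apply lam_spec; lra. Qed.

Definition gamma (t : R) : CMS :=
  match Rlt_le_dec 0 t with
  | left h0 => match Rlt_le_dec t 1 with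
     | left h1 => W X Y t (lam t) (conj h0 h1) (lam_pos_open t h0 h1)
     | right _ => Y end
  | right _ => X end.

Lemma gamma_rep u : 0 <= u <= 1 -> exists pi : (X * Y)%type -> gamma u,
  (forall z, exists p, pi p = z) /\ forall p q, cms_dist (gamma u) (pi p) (pi q) = sc _ (lam u) (e u) p q.
Proof.
  intros Hu. unfold gamma. destruct (Rlt_le_dec 0 u) as [h0|h0].
  - destruct (Rlt_le_dec u 1) as [h1|h1].
    + exists (fun p => p). simpl. split; eauto.
    + assert (u = 1) by lra. subst u. destruct (cms_inhabited X) as [x0].
      exists snd. split.
      * intro y. exists (x0, y). auto.
      * intros p q. rewrite lam_1. unfold sc, e, ed. ring.
  - assert (u = 0) by lra. subst u. destruct (cms_inhabited Y) as [y0].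
    exists fst. split.
    * intro x. exists (x, y0). auto.
    * intros p q. rewrite lam_0. unfold sc, e, ed. ring.
Qed.

Lemma gamma_sphere u : 0 <= u <= 1 -> dGH G (gamma u) = r.
Proof.
  intros Hu. destruct (gamma_rep u Hu) as [pi [Hs He]].
  rewrite dGH_F. destruct (lam_spec u Hu) as [_ Hp]. rewrite <- Hp. unfold Phi.
  apply (F_lift G _ _ _ _ pi (sc_good _ _ _ (ed_good X Y u)) (cms_good _)); auto.
Qed.

Lemma gamma_dist s t : 0 <= s <= 1 -> 0 <= t <= 1 ->
  dGH (gamma s) (gamma t) <= (Rabs (lam s - lam t) * B + Rabs (lam t) * Rabs (s - t) * B) / 2.
Proof.
  intros Hs Ht. destruct (gamma_rep s Hs) as [ps [Hps Hes]]. destruct (gamma_rep t Ht) as [pt [Hpt Het]].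
  apply (dGH_corr _ _ (fun z w => exists p, ps p = z /\ pt p = w)).
  - split.
    + intro z. destruct (Hps z) as [p <-]. eauto.
    + intro w. destruct (Hpt w) as [p <-]. eauto.
  - intros g g' p q [p0 [<- <-]] [q0 [<- <-]]. rewrite Hes, Het.
    replace (2 * ((Rabs (lam s - lam t) * B + Rabs (lam t) * Rabs (s - t) * B) / 2))
      with (Rabs (lam s - lam t) * B + Rabs (lam t) * Rabs (s - t) * B) by field.
    apply sc_diff; auto.
Qed.

Lemma main_path : exists gam : R -> CMS,
      gam 0 = X /\ gam 1 = Y /\
      (forall t, 0 <= t <= 1 -> dGH G (gam t) = r) /\
      (forall t, 0 <= t <= 1 -> forall eps, 0 < eps -> exists delta, 0 < delta /\
         forall s, 0 <= s <= 1 -> Rabs (s - t) < delta -> dGH (gam s) (gam t) < eps).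
Proof.
  exists gamma. split; [|split; [|split]].
  - unfold gamma. destruct (Rlt_le_dec 0 0); [exfalso; lra|reflexivity].
  - unfold gamma. destruct (Rlt_le_dec 0 1); [|exfalso; lra]. destruct (Rlt_le_dec 1 1); [exfalso; lra|reflexivity].
  - apply gamma_sphere.
  - intros t Ht eps He. pose proof B_pos as HB.
    destruct (lam_spec t Ht) as [HL _].
    destruct (lam_cont t Ht (eps / B)) as [d1 [Hd1 Hc]]. apply Rdiv_lt_0_compat; lra.
    assert (Hq : 0 < B * (lam t + 1)) by (apply Rmult_lt_0_compat; lra).
    exists (Rmin d1 (eps / (B * (lam t + 1)))). split.
    { apply Rmin_glb_lt; auto. apply Rdiv_lt_0_compat; lra. }
    intros s Hs Hst.
    pose proof (Rmin_l d1 (eps / (B * (lam t + 1)))). pose proof (Rmin_r d1 (eps / (B * (lam t + 1)))).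
    specialize (Hc s Hs ltac:(lra)).
    eapply Rle_lt_trans; [apply gamma_dist; auto|].
    rewrite (Rabs_right (lam t)) by lra.
    assert (A1 : Rabs (lam s - lam t) * B < eps).
    { apply (Rmult_lt_reg_r (/ B)). apply Rinv_0_lt_compat; lra.
      replace (Rabs (lam s - lam t) * B * / B) with (Rabs (lam s - lam t)) by (field; lra).
      unfold Rdiv in Hc. lra. }
    assert (A2 : lam t * Rabs (s - t) * B < eps).
    { assert (Rabs (s - t) < eps / (B * (lam t + 1))) by lra.
      assert (Rabs (s - t) * (B * (lam t + 1)) < eps).
      { apply (Rmult_lt_reg_r (/ (B * (lam t + 1)))). apply Rinv_0_lt_compat; lra.
        replace (Rabs (s - t) * (B * (lam t + 1)) * / (B * (lam t + 1))) with (Rabs (s - t)) by (field; lra).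
        unfold Rdiv in H1. lra. }
      pose proof (Rabs_pos (s - t)). nra. }
    lra.
Qed.
End Main.

Theorem corollary3 (G : CMS) (r : R) (hr : diam G < r) :
  GH_path_connected (fun Y : CMS => dGH G Y = r).
Proof.
  intros X Y HX HY. eapply main_path; eauto.
Qed.
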